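(* Let $G=(V,E)$ be a directed graph, $s\neq t$ vertices, $k\ge 2$ an integer and $e(u,v)\in E$. Suppose $EV^*_1(s,u)$ and $EV^*_{k-2}(v,t)$ both exist. Then $EV^*_1(s,u)\cap EV^*_{k-2}(v,t)=\emptyset$ if and only if $e(u,v)$ is an edge of $SPG_k(s,t)$.
   Context: A path from $x$ to $y$ in $G$ is a vertex sequence $x=v_0,\dots,v_m=y$ with $(v_{i-1},v_i)\in E$; its length is $m$ and $V(p)$, $E(p)$ are its vertex and edge sets. A simple path has no repeated vertex. $SPG_k(s,t)$ is the subgraph of $G$ formed by the union of vertex sets and edge sets of all simple paths from $s$ to $t$ of length at most $k$. For a vertex $u$ and integer $l\ge 0$, $EV^*_l(s,u)$ exists iff there is at least one simple path from $s$ to $u$ of length at most $l$ not containing $t$, and then $EV^*_l(s,u)$ is the intersection of $V(p)$ over all such paths. Symmetrically, $EV^*_l(v,t)$ exists iff there is at least one simple path from $v$ to $t$ of length at most $l$ not containing $s$, and then it is the intersection of $V(p)$ over all such paths. *)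

(* Defs.v *)
(* A directed graph G = (V,E) is a finite type V with an
   edge relation e : rel V (e x y means (x,y) \in E). *)
From mathcomp Require Import all_boot.
Set Implicit Arguments. Unset Strict Implicit. Unset Printing Implicit Defensive.

Section Paths.
Variables (V : finType) (e : rel V).

(* A path from x to y is the vertex sequence x :: p with path e x p and
   last x p = y; its length is size p.  Vertex set: x :: p.
   Edge set: the consecutive pairs zip (x :: p) p. *)
Definition simple_path_le (x y : V) (l : nat) (p : seq V) : Prop :=
  [/\ path e x p, last x p = y, uniq (x :: p) & size p <= l].

Definition SPG_edge (k : nat) (s t u v : V) : Prop :=
  exists p, simple_path_le s t k p /\ (u, v) \in zip (s :: p) p.

Definition EVs_exists (s t : V) (l : nat) (u : V) : Prop :=
  exists p, simple_path_le s u l p /\ t \notin s :: p.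
Definition in_EVs (s t : V) (l : nat) (u : V) (w : V) : Prop :=
  forall p, simple_path_le s u l p -> t \notin s :: p -> w \in s :: p.

Definition EVt_exists (s t : V) (l : nat) (v : V) : Prop :=
  exists p, simple_path_le v t l p /\ s \notin v :: p.
Definition in_EVt (s t : V) (l : nat) (v : V) (w : V) : Prop :=
  forall p, simple_path_le v t l p -> s \notin v :: p -> w \in v :: p.

End Paths.

(* Main.v *)
Require Import Defs.
From mathcomp Require Import all_boot zify.
From Stdlib Require Import Classical.

Lemma zip_split (V : eqType) (u v : V) (p : seq V) (x : V) :
  (u, v) \in zip (x :: p) p -> exists p1 q, x :: p = p1 ++ u :: v :: q.
Proof.
elim: p x => [|y p IH] x //=.
rewrite in_cons => /orP[/eqP [-> ->]|H].
  by exists [::], p.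
have [p1 [q Hq]] := IH y H.
by exists (x :: p1), q; rewrite Hq.
Qed.

Theorem lemma4p6 (V : finType) (e : rel V) (s t u v : V) (k : nat) :
  s != t -> 2 <= k -> e u v ->
  EVs_exists e s t 1 u -> EVt_exists e s t (k - 2) v ->
  ((~ exists w, in_EVs e s t 1 u w /\ in_EVt e s t (k - 2) v w)
   <-> SPG_edge e k s t u v).
Proof.
move=> snt k2 euv [p0 [Hsp0 Ht0]] [q0 [Hsq0 Hsq]].
have Hsq0' := Hsq0; case: Hsq0' => Hq0 Hlq Huq Hszq.
split.
- move=> Hn.
  have Hsp0' := Hsp0; case: Hsp0' => Hp0 Hl0 Hu0 Hs0.
  case: p0 Hsp0 Ht0 Hp0 Hl0 Hu0 Hs0 => [|x [|y p0']] Hsp0 Ht0 Hp0 Hl0 Hu0 Hs0 //=.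
  + simpl in Hl0; subst u.
    exists (v :: q0); split; first split.
    * by rewrite /= euv Hq0.
    * by rewrite /= Hlq.
    * by rewrite cons_uniq Hsq Huq.
    * rewrite /=; lia.
    * by rewrite /= inE eqxx.
  + simpl in Hl0; subst x.
    have Hnot : ~ in_EVt e s t (k-2) v u.
      move=> H; apply: Hn; exists u; split => //.
      by move=> p [_ <- _ _] _; exact: mem_last.
    rewrite /in_EVt in Hnot.
    have [q Hq] := not_all_ex_not _ _ Hnot.
    have [Hsq1 Hq'] := imply_to_and _ _ Hq.
    have [Hsq2 Huq2] := imply_to_and _ _ Hq'.
    move/negP: Huq2 => Huq2.
    case: Hsq1 => Hqp Hlq1 Huq1 Hszq1.
    move: Hp0 Hu0 => /= /andP[esu _]; rewrite !inE andbT => sNu.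
    exists (u :: v :: q); split; first split.
    * by rewrite /= esu euv Hqp.
    * by rewrite /= Hlq1.
    * rewrite cons_uniq cons_uniq Huq1 Huq2 andbT in_cons negb_or sNu Hsq2.
      by [].
    * rewrite /=; lia.
    * by rewrite /= !inE eqxx orbT.
- move=> [p [[Hp Hl Hu Hs] Hin]] [w [Hw1 Hw2]].
  have Hw := Hw1 p0 Hsp0 Ht0.
  have Hw' := Hw2 q0 Hsq0 Hsq.
  case: (eqVneq w s) => [ews|wNs].
    by subst w; rewrite Hw' in Hsq.
  case: Hsp0 Hw => Hp0 Hl0 Hu0 Hs0.
  case: p0 Hp0 Hl0 Hu0 Hs0 {Ht0} => [|x [|y p0']] Hp0 Hl0 Hu0 Hs0 //=;
    rewrite ?inE ?(negbTE wNs) //=.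
    move=> /eqP Hwx; simpl in Hl0; subst x w.
  have [p1 [q Hpq]] := @zip_split _ u v p s Hin.
  case: p1 Hpq => [|y p1'] /= Hpq.
    by case: Hpq => Hsu; rewrite Hsu eqxx in wNs.
  case: Hpq => Hy Hp1; subst y p.
  move: Hu; rewrite cons_uniq cat_uniq => /andP[Hs1 /and3P[_ _ Huvq]].
  move: Hs1; rewrite mem_cat negb_or => /andP[_ Hs2].
  have Hsvq : s \notin v :: q by move: Hs2; rewrite inE negb_or => /andP[_ ->].
  move: Huvq; rewrite cons_uniq => /andP[Huvq Hvq].
  have Hsp : simple_path_le e v t (k - 2) q.
    split => //.
    - by move: Hp; rewrite cat_path /= => /andP[_ /and3P[_ _ ->]].
    - by rewrite -Hl last_cat.
    - move: Hs; rewrite size_cat /= => Hs; clear -Hs; lia.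
  by move: (Hw2 q Hsp Hsvq); rewrite (negbTE Huvq).
Qed.
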